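(* Let $F$ be a field of characteristic $2$ and let $q=\langle a_1,\dots,a_n\rangle$ be a totally singular quadratic form over $F$ with not all $a_i=0$. Let $L/F$ be a finite field extension, $a\in F$, $\lambda\in L\setminus F$ and $K=F(\lambda)$. (i) If $L/F$ is separable and $a\in D_L(q_L)$, then $a\in D_F(q)$. (ii) If $a\in F^*$ and $a\lambda\in D_K(q_K)$, then $K/F$ is separable. (iii) If $a\in F^*$ and $a\lambda\in D_L(q_L)$, then $K/F$ is separable or $L/K$ is inseparable.
   Context: $\langle a_1,\dots,a_n\rangle$ denotes the quadratic form $a_1x_1^2+\dots+a_nx_n^2$. For a quadratic form $q$ on $V$ over a field $E$, $D_E(q)=\{q(x):x\in V\setminus\{0\}\}$, and $q_E$ denotes scalar extension. *)

(* Defs.v *)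
From HB Require Import structures.
From mathcomp Require Import all_boot all_order all_algebra all_field.
Set Implicit Arguments. Unset Strict Implicit. Unset Printing Implicit Defensive.
Import GRing.Theory.
Local Open Scope ring_scope.

Definition qvals_base (F : fieldType) (n : nat) (c : 'I_n -> F) (y : F) : Prop :=
  exists x : 'I_n -> F, (exists i, x i != 0) /\ y = \sum_(i < n) c i * x i ^+ 2.

(* D_E(q_E) for an intermediate field E (given as a subspace of L):
   values of q_E(x) = \sum c_i x_i^2 for x in E^n, x <> 0, viewed inside L. *)
Definition qvals (F : fieldType) (L : fieldExtType F) (n : nat) (c : 'I_n -> F)
  (E : {vspace L}) (y : L) : Prop :=
  exists x : 'I_n -> L, (forall i, x i \in E) /\ (exists i, x i != 0) /\
    y = \sum_(i < n) c i *: x i ^+ 2.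

(* Main.v *)
Require Import Defs.
From HB Require Import structures.
From mathcomp Require Import all_boot all_order all_algebra all_field.
From Stdlib Require Import Classical.
Import GRing.Theory.
Local Open Scope ring_scope.

Section Aux.
Variables (F : fieldType) (L : fieldExtType F).
Hypothesis hchar : 2%N \in [pchar F].

Lemma h2L : 2%N \in [pchar L].
Proof. by rewrite (pchar_lalg L). Qed.

Lemma addxx (z : L) : z + z = 0.
Proof. by rewrite -mulr2n -mulr_natr (pcharf0 h2L) mulr0. Qed.

Lemma der_qvals n (c : 'I_n -> F) (E : {vspace L}) (D : 'End(L)) y :
  Derivation E D -> qvals c E y -> D y = 0.
Proof.
move=> derD [x [xE [_ ->]]].
rewrite linear_sum big1 // => i _.
by rewrite linearZ /= expr2 (Derivation_mul derD) ?xE // [D _ * _]mulrC addxx scaler0.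
Qed.

Arguments der_qvals {n c E D y}.

Lemma der_exists (l : L) : ~~ separable_element (1%AS : {subfield L}) l ->
  exists D : 'End(L), [/\ Derivation <<1%AS; l>> D, (1%VS <= lker D)%VS & D l != 0].
Proof.
move=> hins.
have : ~ (forall D, Derivation <<1%AS; l>> D -> (1%AS <= lker D)%VS -> (<<1%AS; l>> <= lker D)%VS).
  by move=> H; move/negP: hins; apply; apply/Derivation_separableP.
move/not_all_ex_not=> [D H1].
have [derD H2] := imply_to_and _ _ H1.
have [D1 Dn] := imply_to_and _ _ H2.
exists D; split => //; apply/eqP => Dl0; apply: Dn.
apply/subvP => _ /Fadjoin_polyP [p Kp ->]; rewrite memv_ker.
rewrite (Derivation_horner derD) ?memv_adjoin //; last first.
  by apply: polyOverSv Kp; apply: subv_adjoin.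
rewrite Dl0 mulr0 addr0.
have -> : map_poly D p = 0.
  apply/polyP => i; rewrite coef0 coef_map /=; apply/eqP; rewrite -memv_ker.
  by apply: (subvP D1); apply: (polyOverP Kp).
by rewrite horner0.
Qed.


Lemma part2 n (c : 'I_n -> F) (a : F) (l : L) : a != 0 ->
  qvals c <<1%VS; l>>%VS (a *: l) -> separable 1%VS <<1%VS; l>>%VS.
Proof.
move=> a0 hq.
have -> : separable 1%VS <<1%VS; l>>%VS = separable_element (1%AS : {subfield L}) l.
  by rewrite adjoin_separable_eq.
apply/negP => /negP /der_exists [D [derD D1 Dl]].
have := der_qvals derD hq; rewrite linearZ /= => /eqP.
by rewrite scaler_eq0 (negPf a0) (negPf Dl).
Qed.

Lemma part3 n (c : 'I_n -> F) (a : F) (l : L) : a != 0 ->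
  qvals c fullv (a *: l) ->
  separable 1%VS <<1%VS; l>>%VS || ~~ separable <<1%VS; l>>%VS fullv.
Proof.
move=> a0 hq.
have -> : separable 1%VS <<1%VS; l>>%VS = separable_element (1%AS : {subfield L}) l.
  by rewrite adjoin_separable_eq.
case: (boolP (separable_element _ l)) => //= hins; apply/negP => hsep.
have [D [derD D1 Dl]] := der_exists _ hins.
pose K := <<1%AS; l>>%AS : {subfield L}.
pose z := separable_generator K fullv.
have defL : (fullv : {vspace L}) = <<K; z>>%VS.
  exact: eq_adjoin_separable_generator hsep (subvf _).
have derD' : Derivation fullv (extendDerivation z D K).
  by rewrite defL; apply: extendDerivationP derD (separable_generatorP _ _).
have := der_qvals derD' hq; rewrite linearZ /= extendDerivation_id ?memv_adjoin // => /eqP.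
by rewrite scaler_eq0 (negPf a0) (negPf Dl).
Qed.


Lemma sq_sum m (f : 'I_m -> F) (b : 'I_m -> L) :
  (\sum_(i < m) f i *: b i) ^+ 2 = \sum_(i < m) (f i ^+ 2) *: (b i ^+ 2).
Proof.
rewrite (big_morph (fun x : L => x ^+ 2) (id1 := 0) (op1 := +%R)).
- by apply: eq_bigr => i _; rewrite exprZn.
- by move=> u v; rewrite sqrrD mulr2n addxx addr0.
- by rewrite expr0n.
Qed.

Lemma sq_in_span (B : seq L) (hB : basis_of fullv B) (z : L) :
  z ^+ 2 \in span (map (fun b => b ^+ 2) B).
Proof.
pose T := in_tuple B.
rewrite (coord_basis (X := T) hB (memvf z)) sq_sum.
apply: rpred_sum => i _; apply: rpredZ; apply: memv_span.
by apply: (map_f (fun b => b ^+ 2)); apply: mem_nth; exact: ltn_ord.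
Qed.

Lemma all_in_span (hsep : separable 1%VS (fullv : {vspace L})) (B : seq L)
  (hB : basis_of fullv B) (y : L) : y \in span (map (fun b => b ^+ 2) B).
Proof.
have sy : separable_element (1%AS : {subfield L}) y.
  by move/separableP: hsep; apply; apply: memvf.
rewrite (pcharf_p_separable _ _ 0 h2L) expn1 in sy.
case/Fadjoin_polyP: sy => p Kp Dy; rewrite Dy horner_coef.
apply: rpred_sum => i _.
have /vlineP [k ->] : p`_i \in (1%VS : {vspace L}) := polyOverP Kp i.
rewrite -scalerAl mul1r -exprM mulnC exprM.
by apply: rpredZ; apply: sq_in_span.
Qed.

Lemma part1 n (c : 'I_n -> F) (a : F) :
  separable 1%VS (fullv : {vspace L}) ->
  qvals c fullv (a%:A : L) -> qvals_base c a.
Proof.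
move=> hsep [x [_ [[i0 xi0] hx]]].
pose W := ((1%VS : {vspace L})^C)%VS.
pose B := (1 : L) :: vbasis W.
have hB : basis_of fullv B.
  rewrite basisEdim /B span_cons (span_basis (vbasisP W)) addv_complf subvv /=.
  rewrite size_tuple dimv_compl dimv1 subn1 prednK //.
  exact: (adim_gt0 (fullv : {aspace L})).
pose sq := fun b : L => b ^+ 2.
pose T := in_tuple B.
pose S := map_tuple sq T.
have hS : basis_of fullv S.
  rewrite basisEdim; apply/andP; split.
    by apply/subvP => v _; apply: all_in_span.
  by rewrite size_tuple; move: hB; rewrite basisEdim => /andP [].
have fS := basis_free hS.
pose y := fun (j : 'I_(size B)) i => coord T j (x i).
have key j : coord S j (a%:A) = \sum_i c i * (y j i) ^+ 2.
  rewrite hx.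
  have -> : \sum_i c i *: x i ^+ 2 = \sum_j (\sum_i c i * y j i ^+ 2) *: S`_j.
    rewrite (eq_bigr (fun i => \sum_j (c i * y j i ^+ 2) *: S`_j)); last first.
      move=> i _; rewrite (coord_basis (X := T) hB (memvf (x i))) sq_sum scaler_sumr.
      apply: eq_bigr => k _; rewrite scalerA (nth_map 0) //; exact: ltn_ord.
    rewrite exchange_big; apply: eq_bigr => k _; by rewrite scaler_suml.
  by rewrite coord_sum_free.
have j0lt : (0 < size B)%N by [].
pose j0 : 'I_(size B) := Ordinal j0lt.
have hA j : coord S j (a%:A) = a * (j0 == j)%:R.
  have -> : a%:A = a *: S`_j0 by rewrite /= /sq expr1n.
  by rewrite linearZ /= -[sq 1]/(S`_j0) coord_free.
case: (eqVneq a 0) => [a0 | an0].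
  have [j Hj | none] := pickP (fun j => y j i0 != 0).
    exists (y j); split; first by exists i0.
    by rewrite -key hA a0 mul0r.
  move: xi0; rewrite (coord_basis (X := T) hB (memvf (x i0))) big1 ?eqxx // => j _.
  by have := none j; move=> /negbFE /eqP; rewrite /y => ->; rewrite scale0r.
exists (y j0); split; last by rewrite -key hA eqxx mulr1.
have [i Hi | none] := pickP (fun i => y j0 i != 0); first by exists i.
move: an0; rewrite -[a]mulr1 -[1]/((j0 == j0)%:R) -hA key big1 ?eqxx // => i _.
by have := none i; move=> /negbFE /eqP ->; rewrite expr0n mulr0.
Qed.
End Aux.

Theorem proposition4p1 (F : fieldType) (hchar : 2%N \in [pchar F])
  (n : nat) (c : 'I_n -> F) (hc : exists i, c i != 0)
  (L : fieldExtType F) (a : F) :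
  (* (i) *)
  (separable 1%VS (fullv : {vspace L}) ->
     qvals c fullv (a%:A : L) -> qvals_base c a)
  /\
  (forall lambda : L, lambda \notin 1%VS ->
     (* (ii) *)
     (a != 0 -> qvals c <<1%VS; lambda>>%VS (a *: lambda) ->
        separable 1%VS <<1%VS; lambda>>%VS)
     /\
     (* (iii) *)
     (a != 0 -> qvals c fullv (a *: lambda) ->
        separable 1%VS <<1%VS; lambda>>%VS
        || ~~ separable <<1%VS; lambda>>%VS fullv)).
Proof.
split; first exact: (@part1 F L hchar n c a).
move=> l _; split.
  exact: (@part2 F L hchar n c a l).
exact: (@part3 F L hchar n c a l).
Qed.
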